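(* Let $n\ge 1$ and let $P,Q\in\mathcal{P}_n$ satisfy $P^2=Q^2=I$, $P\neq\pm I$, $Q\neq\pm I$, and $PQ=-QP$. Then there exists a unique pair $(L,M)$ consisting of a $Z$-circuit $L$ on $n$ qubits and an $X$-circuit $M$ on $n$ qubits such that $(ML)\bullet P=I\otimes\cdots\otimes I\otimes Z$ and $(ML)\bullet Q=I\otimes\cdots\otimes I\otimes X$, where $ML$ denotes the product of the operators of $M$ and $L$.
   Context: Matrices: $X=\begin{bmatrix}0&1\\1&0\end{bmatrix}$, $Z=\begin{bmatrix}1&0\\0&-1\end{bmatrix}$, $H=\frac{1}{\sqrt2}\begin{bmatrix}1&1\\1&-1\end{bmatrix}$, $CZ=\mathrm{diag}(1,1,1,-1)$. Operators on $n$ qubits act on $(\mathbb{R}^2)^{\otimes n}$, qubit $1$ being the first tensor factor; a one-qubit gate on qubit $i$, or a two-qubit gate on qubits $i,i+1$ (qubit $i$ = first tensor factor of the gate = its upper qubit, $i+1$ its lower qubit), denotes that matrix tensored with identities on the other qubits. For matrices $C,P$, $C\bullet P=CPC^{-1}$. Real Pauli group: $\mathcal{P}_n=\{\pm(P_1\otimes\cdots\otimes P_n)\mid P_i\in\{I,X,Z,XZ\}\}$. A circuit is a finite sequence of gates $g_1,\dots,g_k$ ($g_1$ applied first); its operator is $g_k\cdots g_1$. Derived generators (formal symbols with defining gate sequences; in two-qubit symbols subscript $1$ is the upper, $2$ the lower qubit; '';'' separates steps): $A_1$ = empty, $A_2$ = $H$, $A_3$ = empty; $C_1$ = empty, $C_2$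 = $H;Z;H$; $E_1$ = empty, $E_2$ = $Z$; $B_1=B_5$ = $H_2;CZ;H_1,H_2;CZ;H_1,H_2;CZ$; $B_2=B_6$ = $CZ;H_1,H_2;CZ$; $B_3=B_7$ = $H_1;CZ;H_1,H_2;CZ$; $B_4=B_8$ = $H_2;CZ;H_2;CZ;H_1,H_2;CZ$; $D_1$ = $CZ;H_1,H_2;CZ;H_1,H_2;CZ;H_2$; $D_2$ = $H_1;CZ;H_1,H_2;CZ;H_2$; $D_3$ = $H_1,H_2;CZ;H_1,H_2;CZ;H_2$; $D_4$ = $H_1;CZ;H_1,H_2;CZ;H_2;CZ$. Symbols with equal defining sequences (e.g. $A_1,A_3$) are distinct symbols. Types in $\{\text{single},\text{double}\}$: $A_1,A_2$ output single, $A_3$ output double; $B_j$ has input type (lower qubit) and output type (upper qubit): $B_1,B_2,B_3$ single$\to$single, $B_4$ single$\to$double, $B_5,B_6,B_7$ double$\to$double, $B_8$ double$\to$single; $C_1,C_2$ have input type single. A $Z$-circuit on $n$ qubits: for some $m\in\{1,\dots,n\}$, $A_a$ on qubit $m$, then $B_{b_{m-1}}$ on qubits $m-1,m$, ..., then $B_{b_1}$ on qubits $1,2$, then $C_c$ on qubit 1, such that each $B$ or $C$ symbol's input type equals the output type of the symbol immediately preceding it. An $X$-circuit on $n$ qubits: $D_{d_1}$ on qubits $1,2$, then $D_{d_2}$ on qubits $2,3$, ..., then $D_{d_{n-1}}$ on qubits $n-1,n$, then $E_e$ on qubit $n$. Circuits of symbols are equal when their symbol sequences (and positions) coincide. *)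

(* Defs.v *)
From mathcomp Require Import all_boot all_order all_algebra.
From mathcomp Require Import mxtens.
From mathcomp Require Import reals.

Set Implicit Arguments.
Unset Strict Implicit.
Unset Printing Implicit Defensive.

Import Order.TTheory GRing.Theory Num.Theory.
Local Open Scope ring_scope.

Section Gates.
Variable R : realType.

(* one-qubit matrices; basis index 0 = |0>, 1 = |1> *)
Definition Xm : 'M[R]_2 := \matrix_(i < 2, j < 2) (if i != j then 1 else 0).
Definition Zm : 'M[R]_2 :=
  \matrix_(i < 2, j < 2) (if i == j then (if (i : nat) == 0%N then 1 else -1) else 0).
Definition Hm : 'M[R]_2 :=
  (Num.sqrt (2 : R))^-1 *:
  \matrix_(i < 2, j < 2) (if ((i : nat) == 1%N) && ((j : nat) == 1%N) then -1 else 1).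
Definition CZm : 'M[R]_4 :=
  \matrix_(i < 4, j < 4) (if i == j then (if (i : nat) == 3%N then -1 else 1) else 0).

(* n-fold tensor product f 0 (x) f 1 (x) ... (x) f (n-1);
   f 0 is the first tensor factor (qubit 1). *)
Fixpoint kron (n : nat) : (nat -> 'M[R]_2) -> 'M[R]_(2 ^ n) :=
  match n return (nat -> 'M[R]_2) -> 'M[R]_(2 ^ n) with
  | 0 => fun _ => 1%:M
  | n'.+1 => fun f =>
      castmx (esym (expnS 2 n'), esym (expnS 2 n')) (f 0%N *t kron n' (fun i => f i.+1))
  end.

Definition pauli_group (n : nat) (P : 'M[R]_(2 ^ n)) : Prop :=
  exists (s : R) (f : nat -> 'M[R]_2),
    (s = 1 \/ s = -1) /\
    (forall i, (i < n)%N -> f i \in [:: 1%:M; Xm; Zm; Xm *m Zm]) /\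
    P = s *: kron n f.

(* one-qubit gate G on qubit q (1-based): I_(2^(q-1)) (x) G (x) I_(2^(n-q)).
   conform_mx only serves to identify the dimension with 2^n (valid for 1<=q<=n). *)
Definition embed1 (n q : nat) (G : 'M[R]_2) : 'M[R]_(2 ^ n) :=
  conform_mx 1%:M ((1%:M : 'M[R]_(2 ^ q.-1)) *t G *t (1%:M : 'M[R]_(2 ^ (n - q)))).

(* two-qubit gate G on qubits q, q+1 (q upper = first tensor factor of G):
   I_(2^(q-1)) (x) G (x) I_(2^(n-q-1))  (valid for 1<=q<n). *)
Definition embed2 (n q : nat) (G : 'M[R]_4) : 'M[R]_(2 ^ n) :=
  conform_mx 1%:M ((1%:M : 'M[R]_(2 ^ q.-1)) *t G *t (1%:M : 'M[R]_(2 ^ (n - q.+1)))).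

End Gates.

(* elementary gates, qubits numbered from 1; CZg q acts on qubits q, q+1 *)
Inductive gate := Hg of nat | Zg of nat | CZg of nat.

Definition gate_op (R : realType) (n : nat) (g : gate) : 'M[R]_(2 ^ n) :=
  match g with
  | Hg q => embed1 n q (Hm R)
  | Zg q => embed1 n q (Zm R)
  | CZg q => embed2 n q (CZm R)
  end.

(* circuit g_1, ..., g_k (g_1 applied first) has operator g_k ... g_1 *)
Definition circuit_op (R : realType) (n : nat) (c : seq gate) : 'M[R]_(2 ^ n) :=
  foldl (fun acc g => gate_op R n g *m acc) 1%:M c.

Definition conj_by (R : realType) (n : nat) (C P : 'M[R]_(2 ^ n)) : 'M[R]_(2 ^ n) :=
  C *m P *m invmx C.

Inductive qtype := single | double.
Inductive Asym := A1 | A2 | A3.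
Inductive Bsym := B1 | B2 | B3 | B4 | B5 | B6 | B7 | B8.
Inductive Csym := C1 | C2.
Inductive Dsym := D1 | D2 | D3 | D4.
Inductive Esym := E1 | E2.

Definition A_out (a : Asym) : qtype :=
  match a with A1 | A2 => single | A3 => double end.
Definition B_in (b : Bsym) : qtype :=
  match b with B1 | B2 | B3 | B4 => single | _ => double end.
Definition B_out (b : Bsym) : qtype :=
  match b with B1 | B2 | B3 => single | B4 => double
             | B5 | B6 | B7 => double | B8 => single end.
Definition C_in (c : Csym) : qtype := single.

(* defining gate sequences; q = the qubit (one-qubit symbols) or the upper
   qubit (two-qubit symbols: subscript 1 = q, subscript 2 = q+1) *)
Definition A_gates (a : Asym) (q : nat) : seq gate :=
  match a with A1 => [::] | A2 => [:: Hg q] | A3 => [::] end.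
Definition C_gates (c : Csym) (q : nat) : seq gate :=
  match c with C1 => [::] | C2 => [:: Hg q; Zg q; Hg q] end.
Definition E_gates (e : Esym) (q : nat) : seq gate :=
  match e with E1 => [::] | E2 => [:: Zg q] end.
Definition B_gates (b : Bsym) (q : nat) : seq gate :=
  match b with
  | B1 | B5 => [:: Hg q.+1; CZg q; Hg q; Hg q.+1; CZg q; Hg q; Hg q.+1; CZg q]
  | B2 | B6 => [:: CZg q; Hg q; Hg q.+1; CZg q]
  | B3 | B7 => [:: Hg q; CZg q; Hg q; Hg q.+1; CZg q]
  | B4 | B8 => [:: Hg q.+1; CZg q; Hg q.+1; CZg q; Hg q; Hg q.+1; CZg q]
  end.
Definition D_gates (d : Dsym) (q : nat) : seq gate :=
  match d with
  | D1 => [:: CZg q; Hg q; Hg q.+1; CZg q; Hg q; Hg q.+1; CZg q; Hg q.+1]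
  | D2 => [:: Hg q; CZg q; Hg q; Hg q.+1; CZg q; Hg q.+1]
  | D3 => [:: Hg q; Hg q.+1; CZg q; Hg q; Hg q.+1; CZg q; Hg q.+1]
  | D4 => [:: Hg q; CZg q; Hg q; Hg q.+1; CZg q; Hg q.+1; CZg q]
  end.

(* A Z-circuit: A_za on qubit zm, then B symbols listed in application order
   zb = [:: b_(m-1); ...; b_1] (the j-th entry, j from 0, acts on qubits
   m-1-j, m-j), then C_zc on qubit 1. *)
Record zcircuit := ZCircuit { zm : nat; za : Asym; zb : seq Bsym; zc : Csym }.

Fixpoint chain_ok (t : qtype) (bs : seq Bsym) (c : Csym) : Prop :=
  match bs with
  | [::] => C_in c = t
  | b :: bs' => B_in b = t /\ chain_ok (B_out b) bs' c
  end.

Definition is_zcircuit (n : nat) (L : zcircuit) : Prop :=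
  (1 <= zm L <= n)%N /\ size (zb L) = (zm L).-1 /\ chain_ok (A_out (za L)) (zb L) (zc L).

Definition zcircuit_gates (L : zcircuit) : seq gate :=
  A_gates (za L) (zm L)
  ++ flatten [seq B_gates (nth B1 (zb L) j) ((zm L).-1 - j) | j <- iota 0 (size (zb L))]
  ++ C_gates (zc L) 1.

(* An X-circuit: D_(d_1) on qubits 1,2, ..., D_(d_(n-1)) on qubits n-1,n, then
   E_e on qubit n; xd = [:: d_1; ...; d_(n-1)]. *)
Record xcircuit := XCircuit { xd : seq Dsym; xe : Esym }.

Definition is_xcircuit (n : nat) (M : xcircuit) : Prop := size (xd M) = n.-1.

Definition xcircuit_gates (n : nat) (M : xcircuit) : seq gate :=
  flatten [seq D_gates (nth D1 (xd M) j) j.+1 | j <- iota 0 (size (xd M))]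
  ++ E_gates (xe M) n.

Arguments pauli_group R n P : clear implicits.
Arguments kron R n f : clear implicits.
Arguments Xm R : clear implicits.
Arguments Zm R : clear implicits.

(* Main.v *)
Require Import Defs.
From mathcomp Require Import all_boot all_order all_algebra.
From mathcomp Require Import mxtens.
From mathcomp Require Import reals.
From Stdlib Require Import FunctionalExtensionality.
From mathcomp Require Import zify.
From mathcomp Require Import ring lra.

Set Implicit Arguments.
Unset Strict Implicit.
Unset Printing Implicit Defensive.

Definition letter := (bool * bool)%type.
Definition lI : letter := (false, false).
Definition lX : letter := (true, false).
Definition lZ : letter := (false, true).
Definition lY : letter := (true, true).
Definition word := nat -> letter.
Definition upd (w : word) (i : nat) (l : letter) : word :=
  fun k => if k == i then l else w k.

Definition actg (g : gate) (st : bool * word) : bool * word :=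
  match g with
  | Hg q => let l := st.2 q.-1 in (st.1 (+) (l.1 && l.2), upd st.2 q.-1 (l.2, l.1))
  | Zg q => (st.1 (+) (st.2 q.-1).1, st.2)
  | CZg q => let l1 := st.2 q.-1 in let l2 := st.2 q in
      (st.1 (+) (l1.1 && l2.1),
       upd (upd st.2 q.-1 (l1.1, l1.2 (+) l2.1)) q (l2.1, l2.2 (+) l1.1))
  end.

Definition actL (gs : seq gate) (st : bool * word) : bool * word :=
  foldl (fun st g => actg g st) st gs.

Lemma actL_cat gs1 gs2 st : actL (gs1 ++ gs2) st = actL gs2 (actL gs1 st).
Proof. by rewrite /actL foldl_cat. Qed.

Lemma actg_inv g st : actg g (actg g st) = st.
Proof.
case: st => s w; case: g => q /=.
- rewrite /upd eqxx /=; case E: (w q.-1) => [x z] /=; congr pair.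
    by case: x {E}; case: z; rewrite /= ?addbF ?addbT ?negbK.
  by apply: functional_extensionality => k; case: eqP => // ->.
- by rewrite /= -addbA addbb addbF.
- case: q => [|q] /=.
    rewrite /upd /= ?eqxx /=; case E: (w 0) => [x z] /=; congr pair.
      by case: x {E}; case: z; rewrite /= ?addbF ?addbT ?negbK.
    apply: functional_extensionality => k; case: eqP => // ->; rewrite E.
    by case: x {E}; case: z.
  have n1 : (q.+1 == q) = false by apply/negbTE; rewrite neq_ltn ltnSn orbT.
  have n2 : (q == q.+1) = false by apply/negbTE; rewrite neq_ltn ltnSn.
  rewrite /upd /= !eqxx ?n1 ?n2 /=.
  case E1: (w q) => [x1 z1]; case E2: (w q.+1) => [x2 z2] /=; congr pair.
    by case: x1 {E1}; case: z1; case: x2 {E2}; case: z2; rewrite /= ?addbF ?addbT ?negbK.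
  apply: functional_extensionality => k.
  case: eqP => [->|_]; first by rewrite E2; case: x1 {E1}; case: z1; case: x2 {E2}; case: z2.
  case: eqP => [->|_] //; by rewrite E1; case: x1 {E1}; case: z1; case: x2 {E2}; case: z2.
Qed.

Lemma actL_rev gs st : actL (rev gs) (actL gs st) = st.
Proof.
elim: gs st => // g gs IH st.
by rewrite rev_cons -cats1 actL_cat /= IH /= actg_inv.
Qed.

Lemma actL_revK gs st : actL gs (actL (rev gs) st) = st.
Proof. by rewrite -{1}(revK gs) actL_rev. Qed.

Lemma actL_inj gs st1 st2 : actL gs st1 = actL gs st2 -> st1 = st2.
Proof. by move=> h; rewrite -(actL_rev gs st1) h actL_rev. Qed.

Inductive lgate := LH0 | LH1 | LZ0 | LCZ.
Definition place (q : nat) (g : lgate) : gate :=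
  match g with LH0 => Hg q | LH1 => Hg q.+1 | LZ0 => Zg q | LCZ => CZg q end.
Definition lactg (g : lgate) (st : bool * letter * letter) : bool * letter * letter :=
  let: (s, u, v) := st in
  match g with
  | LH0 => (s (+) (u.1 && u.2), (u.2, u.1), v)
  | LH1 => (s (+) (v.1 && v.2), u, (v.2, v.1))
  | LZ0 => (s (+) u.1, u, v)
  | LCZ => (s (+) (u.1 && v.1), (u.1, u.2 (+) v.1), (v.1, v.2 (+) u.1))
  end.
Definition lsim (gs : seq lgate) st := foldl (fun st g => lactg g st) st gs.

Lemma upd_upd_same w i l l' : upd (upd w i l) i l' = upd w i l'.
Proof. by apply: functional_extensionality => k; rewrite /upd; case: eqP. Qed.

Lemma local2 q lgs s w : (0 < q)%N ->
  actL (map (place q) lgs) (s, w) =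
  let: (s', u', v') := lsim lgs (s, w q.-1, w q) in (s', upd (upd w q.-1 u') q v').
Proof.
case: q => // q _ /=.
have n1 : (q.+1 == q) = false by apply/negbTE; rewrite neq_ltn ltnSn orbT.
have n2 : (q == q.+1) = false by apply/negbTE; rewrite neq_ltn ltnSn.
elim: lgs s w => [|g gs IH] s w.
  rewrite /=; congr pair; apply: functional_extensionality => k; rewrite /upd.
  by case: eqP => [->//|_]; case: eqP => [->//|].
have step : actg (place q.+1 g) (s, w) =
   let: (s1, u1, v1) := lactg g (s, w q, w q.+1) in (s1, upd (upd w q u1) q.+1 v1).
  case: g => /=; congr pair; apply: functional_extensionality => k; rewrite /upd;
    case: (k =P q.+1) => [?|?]; case: (k =P q) => [?|?]; try (exfalso; lia); subst;
    rewrite ?eqxx ?n1 ?n2 //.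
have -> : lsim (g :: gs) (s, w q, w q.+1) = lsim gs (lactg g (s, w q, w q.+1)) by [].
have -> : actL (map (place q.+1) (g :: gs)) (s, w) =
  actL (map (place q.+1) gs) (actg (place q.+1 g) (s, w)) by [].
rewrite step.
case E: (lactg g (s, w q, w q.+1)) => [[s1 u1] v1].
rewrite IH /upd /= eqxx n2 eqxx.

case: (lsim gs (s1, u1, v1)) => [[s2 u2] v2].
rewrite /upd; f_equal; apply: functional_extensionality => k.
by case: eqP => //; case: eqP.
Qed.

Definition Bloc (b : Bsym) : seq lgate :=
  match b with
  | B1 | B5 => [:: LH1; LCZ; LH0; LH1; LCZ; LH0; LH1; LCZ]
  | B2 | B6 => [:: LCZ; LH0; LH1; LCZ]
  | B3 | B7 => [:: LH0; LCZ; LH0; LH1; LCZ]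
  | B4 | B8 => [:: LH1; LCZ; LH1; LCZ; LH0; LH1; LCZ]
  end.
Definition Dloc (d : Dsym) : seq lgate :=
  match d with
  | D1 => [:: LCZ; LH0; LH1; LCZ; LH0; LH1; LCZ; LH1]
  | D2 => [:: LH0; LCZ; LH0; LH1; LCZ; LH1]
  | D3 => [:: LH0; LH1; LCZ; LH0; LH1; LCZ; LH1]
  | D4 => [:: LH0; LCZ; LH0; LH1; LCZ; LH1; LCZ]
  end.
Definition Aloc (a : Asym) : seq lgate :=
  match a with A2 => [:: LH0] | _ => [::] end.
Definition Cloc (c : Csym) : seq lgate :=
  match c with C1 => [::] | C2 => [:: LH0; LZ0; LH0] end.
Definition Eloc (e : Esym) : seq lgate :=
  match e with E1 => [::] | E2 => [:: LZ0] end.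

Lemma B_gatesE b q : B_gates b q = map (place q) (Bloc b). Proof. by case: b. Qed.
Lemma D_gatesE d q : D_gates d q = map (place q) (Dloc d). Proof. by case: d. Qed.
Lemma A_gatesE a q : A_gates a q = map (place q) (Aloc a). Proof. by case: a. Qed.
Lemma C_gatesE c q : C_gates c q = map (place q) (Cloc c). Proof. by case: c. Qed.
Lemma E_gatesE e q : E_gates e q = map (place q) (Eloc e). Proof. by case: e. Qed.

Definition tb (t : qtype) : bool := if t is Defs.double then true else false.
Definition tl (t : bool) : letter := if t then lY else lZ.
Definition ub (b : Bsym) : letter :=
  match b with B1 | B5 => lI | B2 | B6 => lX | B3 | B7 => lZ | B4 | B8 => lY end.
Definition al (a : Asym) : letter := match a with A1 => lZ | A2 => lX | A3 => lY end.
Definition dl (d : Dsym) : letter := match d with D1 => lI | D2 => lX | D3 => lZ | D4 => lY end.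
Definition isD4 (d : Dsym) : bool := if d is D4 then true else false.
Definition isC2 (c : Csym) : bool := if c is C2 then true else false.
Definition isE2 (e : Esym) : bool := if e is E2 then true else false.
Definition txl (t : bool) : letter := if t then lY else lX.

Lemma upd_id w i : upd w i (w i) = w.
Proof. by apply: functional_extensionality => k; rewrite /upd; case: eqP => [->|]. Qed.

Lemma upd2_id w i j u v : w i = u -> w j = v -> upd (upd w i u) j v = w.
Proof.
move=> hu hv; apply: functional_extensionality => k; rewrite /upd.
by case: (k =P j) => [->//|_]; case: (k =P i) => [->//|].
Qed.

Lemma blockB b q s w : (0 < q)%N -> w q.-1 = ub b -> w q = tl (tb (B_in b)) ->
  actL (B_gates b q) (s, w) = (s, upd (upd w q.-1 (tl (tb (B_out b)))) q lI).
Proof.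
by move=> q0 hu hv; rewrite B_gatesE local2 // hu hv; case: b {hu hv} => /=; rewrite ?addbF ?addbT ?negbK.
Qed.

Lemma blockA a q s w : (0 < q)%N -> w q.-1 = al a ->
  actL (A_gates a q) (s, w) = (s, upd w q.-1 (tl (tb (A_out a)))).
Proof.
move=> q0 hu; rewrite A_gatesE local2 // hu.
have -> : upd w q.-1 (tl (tb (A_out a))) = upd (upd w q.-1 (tl (tb (A_out a)))) q (w q).
  case: q q0 {hu} => // q _; apply: functional_extensionality => k; rewrite /upd.
  by case: (k =P q.+1) => [->|//]; rewrite /= (_ : (q.+1 == q) = false) //; elim: q.
by case: a hu => /= hu; rewrite ?addbF ?addbT ?negbK.
Qed.

Lemma blockC c s w : w 0 = lZ -> actL (C_gates c 1) (s, w) = (s (+) isC2 c, w).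
Proof.
move=> hu; rewrite C_gatesE local2 // /= hu.
by case: c => /=; rewrite ?addbF ?addbT ?negbK; congr pair; apply: upd2_id.
Qed.

Lemma blockD d t q s w : (0 < q)%N -> w q.-1 = txl t -> w q = dl d ->
  actL (D_gates d q) (s, w) = (s, upd (upd w q.-1 lI) q (txl (t (+) isD4 d))).
Proof.
by move=> q0 hu hv; rewrite D_gatesE local2 // hu hv; case: d {hv}; case: t {hu} => /=; rewrite ?addbF ?addbT ?negbK.
Qed.

Lemma blockDZ d q s w : (0 < q)%N -> w q.-1 = lZ -> w q = lI ->
  actL (D_gates d q) (s, w) = (s, upd (upd w q.-1 lI) q lZ).
Proof.
by move=> q0 hu hv; rewrite D_gatesE local2 // hu hv; case: d {hv} => /=; rewrite ?addbF ?addbT ?negbK.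
Qed.

Lemma blockEX e q s w : (0 < q)%N -> w q.-1 = lX ->
  actL (E_gates e q) (s, w) = (s (+) isE2 e, w).
Proof.
move=> q0 hu; rewrite E_gatesE local2 // hu.
by case: e => /=; rewrite ?addbF ?addbT; congr pair; apply: upd2_id.
Qed.

Lemma blockEZ e q s w : (0 < q)%N -> w q.-1 = lZ ->
  actL (E_gates e q) (s, w) = (s, w).
Proof.
move=> q0 hu; rewrite E_gatesE local2 // hu.
by case: e => /=; rewrite ?addbF ?addbT; congr pair; apply: upd2_id.
Qed.

Definition Bsweep (bs : seq Bsym) (q : nat) : seq gate :=
  flatten [seq B_gates (nth B1 bs j) (q - j) | j <- iota 0 (size bs)].
Definition Dsweep (ds : seq Dsym) (q : nat) : seq gate :=
  flatten [seq D_gates (nth D1 ds j) (q + j) | j <- iota 0 (size ds)].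

Lemma BsweepS b bs q : Bsweep (b :: bs) q = B_gates b q ++ Bsweep bs q.-1.
Proof.
rewrite /Bsweep /= subn0; congr (_ ++ _).
rewrite -[1%N]/(1 + 0)%N iotaDl -map_comp; congr flatten; apply: eq_map => j /=.
by congr B_gates; rewrite -subn1 subnDA.
Qed.

Lemma DsweepS d ds q : Dsweep (d :: ds) q = D_gates d q ++ Dsweep ds q.+1.
Proof.
rewrite /Dsweep /= addn0; congr (_ ++ _).
rewrite -[1%N]/(1 + 0)%N iotaDl -map_comp; congr flatten; apply: eq_map => j /=.
by congr D_gates; rewrite addnA addn1.
Qed.

Ltac ifcases := repeat (case: ifP => /= ?); try done; try (exfalso; lia).

Lemma sweepB bs q t c s w : (size bs <= q)%N -> chain_ok t bs c -> w q = tl (tb t) ->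
  (forall j, (j < size bs)%N -> w (q - j).-1 = ub (nth B1 bs j)) ->
  actL (Bsweep bs q) (s, w) =
  (s, fun i => if i == q - size bs then lZ else if (q - size bs < i <= q)%N then lI else w i).
Proof.
elim: bs q t w => [|b bs IH] q t w /=.
  move=> _ <- /= hq _; congr pair; apply: functional_extensionality => i.
  rewrite subn0; case: (i =P q) => [->//|_]; ifcases.
move=> hs [hin hch] hq hj.
rewrite BsweepS actL_cat blockB //; last first.
- by rewrite hin.
- by have := hj 0%N erefl; rewrite subn0.
- lia.
rewrite (IH q.-1 (B_out b)) //; first last.
- move=> j hjs; rewrite /upd.
  have -> : ((q.-1 - j).-1 == q) = false by apply/negbTE; lia.
  have -> : ((q.-1 - j).-1 == q.-1) = false by apply/negbTE; lia.
  have := hj j.+1 hjs; rewrite /=.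
  by have -> : (q - j.+1 = q.-1 - j)%N by lia.
- rewrite /upd; have -> : (q.-1 == q) = false by apply/negbTE; lia.
  by rewrite eqxx.
- lia.
congr pair; apply: functional_extensionality => i; rewrite /upd.
have -> : (q - (size bs).+1 = q.-1 - size bs)%N by lia.
ifcases.
Qed.

Definition xorD (ds : seq Dsym) : bool := foldr (fun d acc => isD4 d (+) acc) false ds.

Lemma sweepDX ds q s w : (0 < q)%N -> w q.-1 = txl (xorD ds) ->
  (forall j, (j < size ds)%N -> w (q + j) = dl (nth D1 ds j)) ->
  actL (Dsweep ds q) (s, w) =
  (s, fun i => if i == q.-1 + size ds then lX else if (q.-1 <= i < q.-1 + size ds)%N then lI else w i).
Proof.
elim: ds q w => [|d ds IH] q w /=.
  move=> _ hq _; congr pair; apply: functional_extensionality => i.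
  rewrite addn0; case: (i =P q.-1) => [->//|_]; ifcases.
move=> q0 hq hj.
rewrite DsweepS actL_cat (blockD (t := isD4 d (+) xorD ds)) //; last first.
- by have := hj 0%N erefl; rewrite addn0.
rewrite (IH q.+1) //=; first last.
- move=> j hjs; rewrite /upd.
  have -> : ((q.+1 + j) == q) = false by apply/negbTE; lia.
  have -> : ((q.+1 + j) == q.-1) = false by apply/negbTE; lia.
  by have := hj j.+1 hjs; rewrite addnS addSn.
- rewrite /upd eqxx; congr txl; by case: (isD4 d); case: (xorD ds).
congr pair; apply: functional_extensionality => i; rewrite /upd.
ifcases.
Qed.

Lemma sweepDZ ds q s w : (0 < q)%N -> w q.-1 = lZ ->
  (forall j, (j < size ds)%N -> w (q + j) = lI) ->
  actL (Dsweep ds q) (s, w) =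
  (s, fun i => if i == q.-1 + size ds then lZ else if (q.-1 <= i < q.-1 + size ds)%N then lI else w i).
Proof.
elim: ds q w => [|d ds IH] q w /=.
  move=> _ hq _; congr pair; apply: functional_extensionality => i.
  rewrite addn0; case: (i =P q.-1) => [->//|_]; ifcases.
move=> q0 hq hj.
rewrite DsweepS actL_cat blockDZ //; last first.
- by have := hj 0%N erefl; rewrite addn0.
rewrite (IH q.+1) //=; first last.
- move=> j hjs; rewrite /upd.
  have -> : ((q.+1 + j) == q) = false by apply/negbTE; lia.
  have -> : ((q.+1 + j) == q.-1) = false by apply/negbTE; lia.
  by have := hj j.+1 hjs; rewrite addnS addSn.
- by rewrite /upd eqxx.
congr pair; apply: functional_extensionality => i; rewrite /upd.
ifcases.
Qed.

Definition Z1w : word := fun i => if i == 0%N then lZ else lI.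
Definition Znw (n : nat) : word := fun i => if i == n.-1 then lZ else lI.
Definition Xnw (n : nat) : word := fun i => if i == n.-1 then lX else lI.

Definition genZ (L : zcircuit) : bool * word :=
  (isC2 (zc L), fun i => if (i < (zm L).-1)%N then ub (nth B1 (zb L) ((zm L).-2 - i))
                         else if i == (zm L).-1 then al (za L) else lI).

Definition genX (n : nat) (M : xcircuit) : bool * word :=
  (isE2 (xe M), fun i => if i == 0%N then txl (xorD (xd M))
                         else if (i < n)%N then dl (nth D1 (xd M) i.-1) else lI).

Lemma genZ_ok n L : is_zcircuit n L -> actL (zcircuit_gates L) (genZ L) = (false, Z1w).
Proof.
case: L => m a zb c [/= /andP [m1 mn] [hs hc]].
rewrite /zcircuit_gates /= -/(Bsweep zb m.-1) !actL_cat.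
rewrite blockA //; last by rewrite /= ltnn eqxx.
rewrite (sweepB (t := A_out a) (c := c)) //; first last.
- move=> j hj; rewrite /upd.
  have -> : ((m.-1 - j).-1 == m.-1) = false by apply/negbTE; lia.
  have -> : ((m.-1 - j).-1 < m.-1)%N by lia.
  by have -> : (m.-2 - (m.-1 - j).-1 = j)%N by lia.
- by rewrite /upd eqxx.
- lia.
rewrite blockC; last by rewrite hs subnn eqxx.
rewrite addbb; congr pair; apply: functional_extensionality => i.
rewrite /Z1w /upd hs subnn; ifcases.
Qed.

Lemma genX_ok n M : (0 < n)%N -> is_xcircuit n M ->
  actL (xcircuit_gates n M) (genX n M) = (false, Xnw n).
Proof.
case: M => ds e n0 /= hs.
rewrite /xcircuit_gates /= -/(Dsweep ds 1) actL_cat.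
rewrite sweepDX //; last first.
  move=> j; rewrite hs -subn1 => hj /=; have -> : (j.+1 < n)%N by lia. by [].
rewrite blockEX //; last by rewrite hs /= eqxx.
rewrite addbb; congr pair; apply: functional_extensionality => i.
rewrite /Xnw hs /=; ifcases.
Qed.

Lemma Z1_ok n M : (0 < n)%N -> is_xcircuit n M ->
  actL (xcircuit_gates n M) (false, Z1w) = (false, Znw n).
Proof.
case: M => ds e n0 /= hs.
rewrite /xcircuit_gates /= -/(Dsweep ds 1) actL_cat.
rewrite sweepDZ //.
rewrite blockEZ //; last by rewrite hs /= eqxx.
congr pair; apply: functional_extensionality => i.
rewrite /Znw /Z1w hs /=; ifcases.
Qed.

Definition wf (n : nat) (w : word) := forall i, (n <= i)%N -> w i = lI.

Fixpoint lastnz (k : nat) (w : word) : nat :=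
  if k is k'.+1 then (if w k' != lI then k' else lastnz k' w) else 0%N.

Lemma lastnz_spec n w : (exists i, (i < n)%N /\ w i != lI) ->
  [/\ (lastnz n w < n)%N, w (lastnz n w) != lI &
      forall i, (lastnz n w < i < n)%N -> w i = lI].
Proof.
elim: n => [[i [//]]|n IH] [i [hi hw]] /=.
case: ifP => hn.
  split=> // j hj; exfalso; lia.
have hi' : (i < n)%N.
  move: hi; rewrite ltnS leq_eqVlt => /orP [/eqP ei|//].
  by move: hn; rewrite -ei hw.
have [h1 h2 h3] := IH (ex_intro _ i (conj hi' hw)).
split=> //; first lia.
move=> j /andP [hj1 hj2]; move: hj2; rewrite ltnS leq_eqVlt => /orP [/eqP ->|hj2].
  by move/negbFE/eqP: hn.
by apply: h3; rewrite hj1 hj2.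
Qed.

Lemma lastnz_eq n w k : (k < n)%N -> w k != lI ->
  (forall i, (k < i < n)%N -> w i = lI) -> lastnz n w = k.
Proof.
elim: n => // n IH hk hw hi /=.
case: ifP => hn.
  case: (ltngtP k n) => h //; last by exfalso; lia.
  by move: hn; rewrite hi ?eqxx // h ltnSn.
apply: IH => //.
  move: hk; rewrite ltnS leq_eqVlt => /orP [/eqP ek|//].
  by move: hn; rewrite -ek hw.
by move=> i /andP [h1 h2]; apply: hi; rewrite h1 /=; lia.
Qed.

Definition isY (l : letter) : bool := l.1 && l.2.
Fixpoint ypar (w : word) (k : nat) : bool :=
  if k is k'.+1 then ypar w k' (+) isY (w k') else false.

Lemma ypar_shift w k : ypar w k.+1 = isY (w 0%N) (+) ypar (fun i => w i.+1) k.
Proof.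
elim: k => [|k IH]; first by rewrite /= addbF.
change (ypar w k.+2) with (ypar w k.+1 (+) isY (w k.+1)).
by rewrite IH -addbA.
Qed.

Lemma ypar_I w k l : (forall i, (k <= i < l)%N -> w i = lI) -> (k <= l)%N -> ypar w l = ypar w k.
Proof.
elim: l => [|l IH] h kl; first by case: k kl h.
move: kl; rewrite leq_eqVlt => /orP [/eqP ->//|kl].
have kl' : (k <= l)%N by lia.
have -> : ypar w l.+1 = ypar w l (+) isY (w l) by [].
rewrite h; last by rewrite kl' /=.
rewrite addbF IH //.
by move=> i /andP [h1 h2]; apply: h; rewrite h1 /=; lia.
Qed.

Definition xorY (bs : seq Bsym) : bool := foldr (fun b acc => isY (ub b) (+) acc) false bs.

Lemma chain_par t bs c : chain_ok t bs c -> tb t = xorY bs.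
Proof.
elim: bs t => [|b bs IH] t /=; first by move=> <-.
by move=> [<- /IH <-]; case: b.
Qed.

Lemma chain_drop t bs c j : chain_ok t bs c -> (j < size bs)%N ->
  chain_ok (B_out (nth B1 bs j)) (drop j.+1 bs) c.
Proof.
elim: bs t j => [|b bs IH] t j //= [_ hc].
case: j => [|j] //= hj; [by rewrite drop0 | exact: (IH _ _ hc hj)].
Qed.

Definition qof (t : bool) : qtype := if t then Defs.double else single.
Definition asym (t : bool) (l : letter) : Asym :=
  if t then A3 else if l == lX then A2 else A1.
Definition bsym (t : bool) (u : letter) : Bsym :=
  if t then (if u == lI then B5 else if u == lX then B6 else if u == lZ then B7 else B4)
  else (if u == lI then B1 else if u == lX then B2 else if u == lZ then B3 else B8).
Definition dsym (l : letter) : Dsym :=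
  if l == lI then D1 else if l == lX then D2 else if l == lZ then D3 else D4.

Definition canonZ (n : nat) (st : bool * word) : zcircuit :=
  let w := st.2 in let k := lastnz n w in
  ZCircuit k.+1 (asym (ypar w k) (w k))
    (mkseq (fun j => bsym (ypar w (k.-1 - j)) (w (k.-1 - j))) k)
    (if st.1 then C2 else C1).

Definition canonX (n : nat) (st : bool * word) : xcircuit :=
  XCircuit (mkseq (fun j => dsym (st.2 j.+1)) n.-1) (if st.1 then E2 else E1).

Lemma ypar_genZ n L k : is_zcircuit n L -> (k <= (zm L).-1)%N ->
  ypar (genZ L).2 k = xorY (drop ((zm L).-1 - k) (zb L)).
Proof.
case: L => m a zb c [/= /andP [m1 mn] [hs hc]].
elim: k => [|k IH] hk /=.
  by rewrite subn0 -hs drop_size.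
rewrite IH; last lia.
have hk' : (k < m.-1)%N by lia.
rewrite hk' (@drop_nth _ B1 (m.-1 - k.+1)); last lia.
have -> : ((m.-1 - k.+1).+1 = m.-1 - k)%N by lia.
have -> : (m.-2 - k = m.-1 - k.+1)%N by lia.
by rewrite /= addbC.
Qed.

Lemma canonZ_gen n L : is_zcircuit n L -> canonZ n (genZ L) = L.
Proof.
move=> hL; have hL' := hL; move: hL'.
case: L hL => m a zb c hL [/= /andP [m1 mn] [hs hc]].
have hlast : lastnz n (genZ (ZCircuit m a zb c)).2 = m.-1.
  apply: lastnz_eq => /=; first lia.
  - by rewrite ltnn eqxx; case: a {hL hc}.
  - move=> i /andP [h1 h2]; have -> : (i < m.-1)%N = false by lia.
    by have -> : (i == m.-1) = false by apply/negbTE; lia.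
rewrite /canonZ hlast prednK //.
have hy := ypar_genZ (k := m.-1) hL (leqnn _); rewrite /= subnn drop0 in hy.
congr ZCircuit.
- rewrite hy -(chain_par hc) /= ltnn eqxx.
  by case: a {hL hc hy hlast}.
- apply: (@eq_from_nth _ B1); first by rewrite size_mkseq hs.
  move=> j; rewrite size_mkseq => hj; rewrite nth_mkseq //.
  rewrite (ypar_genZ (k := m.-2 - j) hL) /=; last lia.
  have -> : (m.-1 - (m.-2 - j) = j.+1)%N by lia.
  rewrite -(chain_par (chain_drop hc _)); last by rewrite hs.
  have -> : (m.-2 - j < m.-1)%N by lia.
  have -> : (m.-2 - (m.-2 - j) = j)%N by lia.
  by case: (nth B1 zb j).
- by case: c {hL hc hlast hy}.
Qed.

Lemma mkseq_S (T : Type) (f : nat -> T) k :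
  mkseq f k.+1 = f 0%N :: mkseq (fun j => f j.+1) k.
Proof.
rewrite /mkseq /= -[1%N]/(1 + 0)%N iotaDl -map_comp; congr cons.
Qed.

Lemma chain_canon w k c :
  chain_ok (qof (ypar w k)) (mkseq (fun j => bsym (ypar w (k.-1 - j)) (w (k.-1 - j))) k) c.
Proof.
elim: k => [|k IH]; first by [].
rewrite mkseq_S /= subn0; split.
  by case: (ypar w k); case: (w k) => [[] []].
have -> : (B_out (bsym (ypar w k) (w k))) = qof (ypar w k).
  by case: (ypar w k); case: (w k) => [[] []].
suff -> : mkseq (fun j => bsym (ypar w (k - j.+1)) (w (k - j.+1))) k =
          mkseq (fun j => bsym (ypar w (k.-1 - j)) (w (k.-1 - j))) k by [].
by apply: eq_mkseq => j /=; rewrite subnS -subn1 -subnDA addnC subnDA subn1.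
Qed.

Lemma genZ_canon n s w : wf n w -> (exists i, (i < n)%N /\ w i != lI) -> ypar w n = false ->
  is_zcircuit n (canonZ n (s, w)) /\ genZ (canonZ n (s, w)) = (s, w).
Proof.
move=> hwf hex hpar.
have [h1 h2 h3] := lastnz_spec hex.
set k := lastnz n w in h1 h2 h3 *.
have hI : forall i, (k < i)%N -> w i = lI.
  move=> i hi; case: (ltnP i n) => hin; last exact: hwf.
  by apply: h3; rewrite hi.
have hpk : ypar w k = isY (w k).
  have e := ypar_I (w := w) (k := k.+1) (l := n) (fun i hi => hI i (proj1 (andP hi))) h1.
  by move: e; rewrite hpar /= => /esym; case: (ypar w k); case: (isY (w k)).
split.
  rewrite /is_zcircuit /=; split; first exact: h1.
  split; first by rewrite size_mkseq.
  have -> : A_out (asym (ypar w k) (w k)) = qof (ypar w k) by rewrite /asym; case: (ypar w k); case: (w k == lX).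
  exact: chain_canon.
rewrite /genZ /=; congr pair; first by case: s.
apply: functional_extensionality => i.
case: ifP => hi.
  rewrite nth_mkseq; last lia.
  have -> : (k.-1 - (k.-1 - i) = i)%N by lia.
  by case: (ypar w i); case: (w i) => [[] []].
case: ifP => [/eqP ->|hik].
  rewrite hpk; move: h2; case: (w k) => [[] []] //.
have : (k < i)%N by move/negbT: hi; move/negbT: hik; lia.
by move/hI.
Qed.

Lemma xorD_mkseq (g : word) k : xorD (mkseq (fun j => dsym (g j)) k) = ypar g k.
Proof.
elim: k => [|k IH] //.
rewrite mkseqS /xorD foldr_rcons /= -IH /xorD.
have -> : forall (s : seq Dsym) a, foldr (fun d acc => isD4 d (+) acc) a s =
   foldr (fun d acc => isD4 d (+) acc) false s (+) a.
  by move=> s a; elim: s => [|d s IHs] //=; rewrite IHs addbA.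
by case: (g k) => [[] []] /=; rewrite ?addbF ?addbT.
Qed.

Lemma canonX_gen n M : (0 < n)%N -> is_xcircuit n M -> canonX n (genX n M) = M.
Proof.
case: M => ds e n0 /= hs; rewrite /canonX /=; congr XCircuit.
  apply: (@eq_from_nth _ D1); first by rewrite size_mkseq hs.
  move=> j; rewrite size_mkseq => hj; rewrite nth_mkseq //.
  have -> : (j.+1 < n)%N by lia.
  by case: (nth D1 ds j).
by case: e {hs}.
Qed.

Lemma genX_canon n s w : (0 < n)%N -> wf n w -> (w 0%N = lX \/ w 0%N = lY) -> ypar w n = false ->
  is_xcircuit n (canonX n (s, w)) /\ genX n (canonX n (s, w)) = (s, w).
Proof.
move=> n0 hwf h0 hpar; split; first by rewrite /is_xcircuit /= size_mkseq.
rewrite /genX /=; congr pair; first by case: s.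
apply: functional_extensionality => i.
case: ifP => [/eqP ->|hi0].
  rewrite xorD_mkseq.
  have := ypar_shift w n.-1; rewrite prednK // hpar.
  by case: h0 => ->; case: (ypar _ _).
case: ifP => hin; last by rewrite hwf //; lia.
rewrite nth_mkseq; last lia.
rewrite prednK; last lia.
by case: (w i) => [[] []].
Qed.

Definition valid (n : nat) (g : gate) : bool :=
  match g with Hg q | Zg q => (0 < q <= n)%N | CZg q => (0 < q < n)%N end.

Lemma wf_actL n gs st : all (valid n) gs -> wf n st.2 -> wf n (actL gs st).2.
Proof.
elim: gs st => [|g gs IH] [s w] //= /andP [hg hgs] hw; apply: IH => //.
case: g hg => q /= /andP [q0 qn] i hi /=; rewrite /upd.
- have -> : (i == q.-1) = false by apply/negbTE; lia.
  exact: hw.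
- exact: hw.
- have -> : (i == q) = false by apply/negbTE; lia.
  have -> : (i == q.-1) = false by apply/negbTE; lia.
  exact: hw.
Qed.

Lemma valid_B n b q : (0 < q < n)%N -> all (valid n) (B_gates b q).
Proof. move=> /andP [h1 h2]; have h3 : (q <= n)%N by lia. by case: b => /=; rewrite h1 h2 h3. Qed.
Lemma valid_D n d q : (0 < q < n)%N -> all (valid n) (D_gates d q).
Proof. move=> /andP [h1 h2]; have h3 : (q <= n)%N by lia. by case: d => /=; rewrite h1 h2 h3. Qed.

Lemma all_flat (T : Type) (P : pred T) (ss : seq (seq T)) : all P (flatten ss) = all (all P) ss.
Proof. by elim: ss => //= s ss IH; rewrite all_cat IH. Qed.

Lemma valid_zc n L : is_zcircuit n L -> all (valid n) (zcircuit_gates L).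
Proof.
case: L => m a zb c [/= /andP [m1 mn] [hs hc]].
rewrite /zcircuit_gates /= !all_cat; apply/and3P; split.
- by case: a {hc} => //=; rewrite m1 mn.
- rewrite all_flat all_map; apply/allP => j; rewrite mem_iota add0n => /andP [_ hj] /=.
  apply: valid_B; lia.
- have n1 : (1 <= n)%N by lia.
  by case: c {hc} => //=; rewrite n1.
Qed.

Lemma valid_xc n M : (0 < n)%N -> is_xcircuit n M -> all (valid n) (xcircuit_gates n M).
Proof.
case: M => ds e n0 /= hs.
rewrite /xcircuit_gates /= !all_cat; apply/andP; split.
- rewrite all_flat all_map; apply/allP => j; rewrite mem_iota add0n => /andP [_ hj] /=.
  apply: valid_D; move: hj; rewrite hs -subn1; lia.
- by case: e {hs} => //=; rewrite n0 leqnn.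
Qed.

Lemma Z1w0 : Z1w 0%N = lZ. Proof. by []. Qed.
Lemma Z1wS i : i != 0%N -> Z1w i = lI. Proof. by rewrite /Z1w => /negbTE ->. Qed.

Lemma Znw_wf n : (0 < n)%N -> wf n (Znw n).
Proof. move=> n0 i hi; rewrite /Znw; have -> : (i == n.-1) = false by apply/negbTE; lia. by []. Qed.
Lemma Xnw_wf n : (0 < n)%N -> wf n (Xnw n).
Proof. move=> n0 i hi; rewrite /Xnw; have -> : (i == n.-1) = false by apply/negbTE; lia. by []. Qed.

Import Order.TTheory GRing.Theory Num.Theory.
Local Open Scope ring_scope.

Section Mat.
Variable R : realType.

Lemma castmx_irr m1 m2 n1 n2 (e e' : (m1 = m2) * (n1 = n2)) (A : 'M[R]_(m1, n1)) :
  castmx e A = castmx e' A.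
Proof.
case: e e' => e1 e2 [e1' e2'].
by rewrite (eq_irrelevance e1 e1') (eq_irrelevance e2 e2').
Qed.

Lemma castmx_mulg m1 m2 n1 n2 p1 p2 (e1 : m1 = m2) (e2 : n1 = n2) (e3 : p1 = p2)
  (A : 'M[R]_(m1, n1)) (B : 'M[R]_(n1, p1)) :
  castmx (e1, e2) A *m castmx (e2, e3) B = castmx (e1, e3) (A *m B).
Proof. by case: m2 / e1; case: n2 / e2; case: p2 / e3; rewrite !castmx_id. Qed.

Lemma tensmx_castl m1 m2 n1 n2 p q (e1 : m1 = m2) (e2 : n1 = n2)
  (A : 'M[R]_(m1, n1)) (B : 'M[R]_(p, q)) :
  castmx (e1, e2) A *t B = castmx (congr1 (muln^~ p) e1, congr1 (muln^~ q) e2) (A *t B).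
Proof. by case: m2 / e1; case: n2 / e2; rewrite !castmx_id. Qed.

Lemma tensmx_castr m1 m2 n1 n2 p q (e1 : m1 = m2) (e2 : n1 = n2)
  (A : 'M[R]_(p, q)) (B : 'M[R]_(m1, n1)) :
  A *t castmx (e1, e2) B = castmx (congr1 (muln p) e1, congr1 (muln q) e2) (A *t B).
Proof. by case: m2 / e1; case: n2 / e2; rewrite !castmx_id. Qed.

Lemma castmx_scale m1 m2 n1 n2 (e : (m1 = m2) * (n1 = n2)) (c : R) (A : 'M[R]_(m1, n1)) :
  castmx e (c *: A) = c *: castmx e A.
Proof. by apply/matrixP => i j; rewrite !(castmxE, mxE). Qed.

Lemma tensmxZl m n p q (c : R) (A : 'M[R]_(m, n)) (B : 'M[R]_(p, q)) :
  (c *: A) *t B = c *: (A *t B).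
Proof. by apply/matrixP => i j; rewrite !mxE mulrA. Qed.

Lemma tensmxZr m n p q (c : R) (A : 'M[R]_(m, n)) (B : 'M[R]_(p, q)) :
  A *t (c *: B) = c *: (A *t B).
Proof. by apply/matrixP => i j; rewrite !mxE mulrCA. Qed.

Lemma tensmxA m1 n1 m2 n2 m3 n3 (A : 'M[R]_(m1, n1)) (B : 'M[R]_(m2, n2)) (C : 'M[R]_(m3, n3)) :
  (A *t B) *t C = castmx (mulnA _ _ _, mulnA _ _ _) (A *t (B *t C)).
Proof.
apply/matrixP => i j.
case: (mxtens_indexP i) => i12 i3; case: (mxtens_indexP i12) => i1 i2.
case: (mxtens_indexP j) => j12 j3; case: (mxtens_indexP j12) => j1 j2.
rewrite !tensmxE castmxE.
have -> : cast_ord (esym (mulnA m1 m2 m3)) (mxtens_index (mxtens_index (i1, i2), i3))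
        = mxtens_index (i1, mxtens_index (i2, i3)).
  by apply: val_inj => /=; rewrite mulnDl -mulnA addnA.
have -> : cast_ord (esym (mulnA n1 n2 n3)) (mxtens_index (mxtens_index (j1, j2), j3))
        = mxtens_index (j1, mxtens_index (j2, j3)).
  by apply: val_inj => /=; rewrite mulnDl -mulnA addnA.
by rewrite !tensmxE mulrA.
Qed.

Lemma tens1l m n (A : 'M[R]_(m, n)) :
  (1%:M : 'M[R]_1) *t A = castmx (esym (mul1n _), esym (mul1n _)) A.
Proof.
apply/matrixP => i j.
case: (mxtens_indexP i) => i0 i1; case: (mxtens_indexP j) => j0 j1.
rewrite tensmxE castmxE !mxE (ord1 i0) (ord1 j0) /= mul1r.
by congr (A _ _); apply: val_inj.
Qed.

Lemma tens1r m n (A : 'M[R]_(m, n)) :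
  A *t (1%:M : 'M[R]_1) = castmx (esym (muln1 _), esym (muln1 _)) A.
Proof.
apply/matrixP => i j.
case: (mxtens_indexP i) => i0 i1; case: (mxtens_indexP j) => j0 j1.
rewrite tensmxE castmxE !mxE (ord1 i1) (ord1 j1) /= mulr1.
by congr (A _ _); apply: val_inj => /=; rewrite muln1 addn0.
Qed.

Lemma tens11 m n : (1%:M : 'M[R]_m) *t (1%:M : 'M[R]_n) = 1%:M.
Proof.
apply/matrixP => i j.
case: (mxtens_indexP i) => i1 i2; case: (mxtens_indexP j) => j1 j2.
rewrite tensmxE !mxE.
have -> : (mxtens_index (i1, i2) == mxtens_index (j1, j2)) = (i1 == j1) && (i2 == j2).
  apply/eqP/andP => [h|[/eqP -> /eqP ->]] //.
  by move: (congr1 (@mxtens_unindex m n) h); rewrite !mxtens_indexK => -[-> ->].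
by case: (i1 == j1); case: (i2 == j2); rewrite /= ?mulr1n ?mulr0n ?mulr1 ?mulr0 ?mul0r.
Qed.

Lemma castmx1 m1 m2 (e : m1 = m2) : castmx (e, e) (1%:M : 'M[R]_m1) = 1%:M.
Proof. by case: m2 / e; rewrite castmx_id. Qed.

Definition kronR := kron R.

Lemma kronS n f : kron R n.+1 f =
  castmx (esym (expnS 2 n), esym (expnS 2 n)) (f 0%N *t kron R n (fun i => f i.+1)).
Proof. by []. Qed.

Lemma kron_ext n f g : (forall i, (i < n)%N -> f i = g i) -> kron R n f = kron R n g.
Proof.
elim: n f g => [|n IH] f g h //.
rewrite !kronS h // (IH _ (fun i => g i.+1)) //.
by move=> i hi; apply: h.
Qed.

Lemma kron_add a b f (E : (2 ^ a * 2 ^ b = 2 ^ (a + b))%N) :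
  kron R (a + b) f = castmx (E, E) (kron R a f *t kron R b (fun i => f (a + i)%N)).
Proof.
elim: a f E => [|a IH] f E.
  rewrite /= tens1l castmx_comp.
  by rewrite (castmx_irr _ (erefl, erefl)) castmx_id.
have -> : kron R (a.+1 + b) f = kron R (a + b).+1 f by [].
rewrite kronS (IH _ (esym (expnD 2 a b))) tensmx_castr castmx_comp.
rewrite kronS tensmx_castl castmx_comp tensmxA castmx_comp.
by apply: castmx_irr.
Qed.

Lemma tensmxA' m1 n1 m2 n2 m3 n3 (A : 'M[R]_(m1, n1)) (B : 'M[R]_(m2, n2)) (C : 'M[R]_(m3, n3)) :
  A *t (B *t C) = castmx (esym (mulnA _ _ _), esym (mulnA _ _ _)) ((A *t B) *t C).
Proof. by rewrite tensmxA castmx_comp (castmx_irr _ (erefl, erefl)) castmx_id. Qed.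

Definition trip m p k N (E : (m * p * k = N)%N) (K1 : 'M[R]_m) (F : 'M[R]_p) (K2 : 'M[R]_k)
  : 'M[R]_N := castmx (E, E) (K1 *t F *t K2).

Lemma trip_mul m p k N (E : (m * p * k = N)%N) K1 F K2 K1' F' K2' :
  trip E K1 F K2 *m trip E K1' F' K2' = trip E (K1 *m K1') (F *m F') (K2 *m K2').
Proof. by rewrite /trip castmx_mulg !tensmx_mul. Qed.

Lemma trip_scale m p k N (E : (m * p * k = N)%N) K1 c F K2 :
  trip E K1 (c *: F) K2 = c *: trip E K1 F K2.
Proof. by rewrite /trip tensmxZr tensmxZl castmx_scale. Qed.

Lemma trip1 m p k N (E : (m * p * k = N)%N) :
  trip E 1%:M 1%:M 1%:M = 1%:M.
Proof. by rewrite /trip !tens11 castmx1. Qed.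

Lemma kron_trip1 a b f (E : (2 ^ a * 2 * 2 ^ b = 2 ^ (a + b.+1))%N) :
  kron R (a + b.+1) f = trip E (kron R a f) (f a) (kron R b (fun i => f (a.+1 + i)%N)).
Proof.
rewrite (@kron_add a b.+1 f (esym (expnD 2 a b.+1))) kronS tensmx_castr castmx_comp addn0.
rewrite (@kron_ext b (fun i => f (a + i.+1)%N) (fun i => f (a.+1 + i)%N)); last first.
  by move=> i _; rewrite addnS addSn.
by rewrite tensmxA' castmx_comp /trip; apply: castmx_irr.
Qed.

Lemma kron_trip2 a b f (E : (2 ^ a * 4 * 2 ^ b = 2 ^ (a + b.+2))%N) :
  kron R (a + b.+2) f = trip E (kron R a f) (f a *t f a.+1) (kron R b (fun i => f (a.+2 + i)%N)).
Proof.
rewrite (@kron_add a b.+2 f (esym (expnD 2 a b.+2))) kronS kronS tensmx_castr castmx_comp.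
rewrite addn0 addn1.
rewrite (@kron_ext b (fun i => f (a + i.+2)%N) (fun i => f (a.+2 + i)%N)); last first.
  by move=> i _; rewrite !addnS !addSn.
rewrite tensmxA' castmx_comp tensmx_castr castmx_comp tensmxA' castmx_comp.
rewrite (tensmxA (kron R a f) (f a) (f a.+1)) tensmx_castl castmx_comp.
by rewrite /trip; apply: castmx_irr.
Qed.

Lemma conform_cast m N (E : m = N) (X : 'M[R]_m) : conform_mx (1%:M : 'M[R]_N) X = castmx (E, E) X.
Proof. by rewrite -(conform_castmx (E, E)) conform_mx_id. Qed.

Lemma embed1_trip a b G (E : (2 ^ a * 2 * 2 ^ b = 2 ^ (a + b.+1))%N) :
  embed1 (a + b.+1) a.+1 G = trip E 1%:M G 1%:M.
Proof.
rewrite /embed1 /=.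
have -> : (a + b.+1 - a.+1 = b)%N by lia.
by rewrite (conform_cast E).
Qed.

Lemma embed2_trip a b G (E : (2 ^ a * 4 * 2 ^ b = 2 ^ (a + b.+2))%N) :
  embed2 (a + b.+2) a.+1 G = trip E 1%:M G 1%:M.
Proof.
rewrite /embed2 /=.
have -> : (a + b.+2 - a.+2 = b)%N by lia.
by rewrite (conform_cast E).
Qed.

Definition o0 : 'I_2 := @Ordinal 2 0 erefl.
Definition o1 : 'I_2 := @Ordinal 2 1 erefl.
Lemma ord2 (i : 'I_2) : i = o0 \/ i = o1.
Proof. by case: i => [[|[|//]] hi]; [left|right]; apply: val_inj. Qed.

Definition mx2 (a b c d : R) : 'M[R]_2 :=
  \matrix_(i, j) if (i : nat) == 0%N then (if (j : nat) == 0%N then a else b)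
                 else (if (j : nat) == 0%N then c else d).

Lemma mx2_mul a b c d a' b' c' d' :
  mx2 a b c d *m mx2 a' b' c' d' =
  mx2 (a * a' + b * c') (a * b' + b * d') (c * a' + d * c') (c * b' + d * d').
Proof.
apply/matrixP => i j; rewrite !mxE !big_ord_recr big_ord0 /= !mxE /= add0r.
by case: (ord2 i) => ->; case: (ord2 j) => ->.
Qed.

Lemma mx2_scale k a b c d : k *: mx2 a b c d = mx2 (k * a) (k * b) (k * c) (k * d).
Proof.
by apply/matrixP => i j; rewrite !mxE; case: (ord2 i) => ->; case: (ord2 j) => ->.
Qed.

Lemma mx2_tr a b c d : (mx2 a b c d)^T = mx2 a c b d.
Proof.
by apply/matrixP => i j; rewrite !mxE; case: (ord2 i) => ->; case: (ord2 j) => ->.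
Qed.

Lemma mx2_trace a b c d : \tr (mx2 a b c d) = a + d.
Proof. by rewrite /mxtrace !big_ord_recr big_ord0 /= !mxE /= add0r. Qed.

Lemma mx2_1 : (1%:M : 'M[R]_2) = mx2 1 0 0 1.
Proof.
by apply/matrixP => i j; rewrite !mxE; case: (ord2 i) => ->; case: (ord2 j) => ->.
Qed.
Lemma mx2_X : Xm R = mx2 0 1 1 0.
Proof.
by apply/matrixP => i j; rewrite !mxE; case: (ord2 i) => ->; case: (ord2 j) => ->.
Qed.
Lemma mx2_Z : Zm R = mx2 1 0 0 (-1).
Proof.
by apply/matrixP => i j; rewrite !mxE; case: (ord2 i) => ->; case: (ord2 j) => ->.
Qed.
Definition hh : R := (Num.sqrt (2 : R))^-1.
Lemma mx2_H : Hm R = hh *: mx2 1 1 1 (-1).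
Proof.
rewrite /Hm; congr (_ *: _).
by apply/matrixP => i j; rewrite !mxE; case: (ord2 i) => ->; case: (ord2 j) => ->.
Qed.
Lemma hh2 : hh * hh * 2 = 1.
Proof.
rewrite /hh -invrM ?unitfE ?sqrtr_eq0 -?ltNge ?ltr0n //.
rewrite -expr2 sqr_sqrtr ?ler0n // mulVf // pnatr_eq0 //.
Qed.

Definition lm (l : letter) : 'M[R]_2 :=
  match l with
  | (false, false) => 1%:M | (true, false) => Xm R
  | (false, true) => Zm R | (true, true) => Xm R *m Zm R
  end.

Definition lmx (l : letter) : 'M[R]_2 :=
  match l with
  | (false, false) => mx2 1 0 0 1 | (true, false) => mx2 0 1 1 0
  | (false, true) => mx2 1 0 0 (-1) | (true, true) => mx2 0 (-1) 1 0
  end.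

Lemma lm_mx2 l : lm l = lmx l.
Proof.
case: l => [[] []]; rewrite /= ?mx2_1 ?mx2_X ?mx2_Z ?mx2_mul //.
by congr mx2; ring.
Qed.

Ltac nsimp := rewrite /= ?mul1r ?mulr1 ?mul0r ?mulr0 ?mulrN ?mulNr ?opprK ?oppr0 ?mulN1r ?mulrN1
   ?add0r ?addr0.

Lemma H0conj l : mx2 1 1 1 (-1) *m lm l *m mx2 1 1 1 (-1) =
  2 *: ((if l.1 && l.2 then -1 else 1) *: lm (l.2, l.1)).
Proof. by rewrite !lm_mx2; case: l => [[] []]; rewrite /= !mx2_mul !mx2_scale; congr mx2; ring. Qed.

Lemma Htab l : Hm R *m lm l *m Hm R = (if l.1 && l.2 then -1 else 1) *: lm (l.2, l.1).
Proof.
by rewrite mx2_H -!scalemxAl -scalemxAr H0conj !scalerA mulrA hh2 mul1r.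
Qed.

Lemma Ztab l : Zm R *m lm l *m Zm R = (if l.1 then -1 else 1) *: lm l.
Proof. by rewrite mx2_Z !lm_mx2; case: l => [[] []]; rewrite /= !mx2_mul !mx2_scale; congr mx2; ring. Qed.

Lemma sqtab l : lm l *m lm l = (if isY l then -1 else 1) *: 1%:M.
Proof. by rewrite mx2_1 !lm_mx2; case: l => [[] []]; rewrite /= !mx2_mul !mx2_scale; congr mx2; ring. Qed.

Lemma Zcomm l : Zm R *m lm l = (if l.1 then -1 else 1) *: (lm l *m Zm R).
Proof. by rewrite mx2_Z !lm_mx2; case: l => [[] []]; rewrite /= !mx2_mul !mx2_scale; congr mx2; ring. Qed.

Lemma trtab l l' : \tr (lm l *m (lm l')^T) = if l == l' then 2 else 0.
Proof.
rewrite !lm_mx2; case: l => [[] []]; case: l' => [[] []];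
  rewrite /= !mx2_tr !mx2_mul mx2_trace; ring.
Qed.

Lemma lm_in l : lm l \in [:: 1%:M; Xm R; Zm R; Xm R *m Zm R].
Proof. by case: l => [[] []]; rewrite !inE eqxx ?orbT. Qed.

Definition dz (i : 'I_4) : R := if (i : nat) == 3%N then -1 else 1.

Lemma CZ_entry (A : 'M[R]_4) i j : (CZm R *m A *m CZm R) i j = dz i * A i j * dz j.
Proof.
have hl : forall (B : 'M[R]_4) k, (CZm R *m B) i k = dz i * B i k.
  move=> B k; rewrite mxE (bigD1 i) //= big1 ?addr0; first by rewrite !mxE eqxx.
  by move=> l hl; rewrite !mxE eq_sym (negbTE hl) mul0r.
rewrite mxE (bigD1 j) //= big1 ?addr0; first by rewrite hl !mxE eqxx.
by move=> l hl'; rewrite [CZm R l j]mxE (negbTE hl') mulr0.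
Qed.

Lemma dz_idx (i1 i2 : 'I_2) : dz (mxtens_index (i1, i2)) = if (i1 == o1) && (i2 == o1) then -1 else 1.
Proof. by case: (ord2 i1) => ->; case: (ord2 i2) => ->. Qed.

Lemma CZtab l1 l2 : CZm R *m (lm l1 *t lm l2) *m CZm R =
  (if l1.1 && l2.1 then -1 else 1) *: (lm (l1.1, l1.2 (+) l2.1) *t lm (l2.1, l2.2 (+) l1.1)).
Proof.
apply/matrixP => i j; rewrite CZ_entry [RHS]mxE.
case: (@mxtens_indexP 2 2 i) => i1 i2; case: (@mxtens_indexP 2 2 j) => j1 j2.
rewrite !tensmxE !dz_idx !lm_mx2.
case: l1 => [[] []]; case: l2 => [[] []];
  case: (ord2 i1) => ->; case: (ord2 i2) => ->; case: (ord2 j1) => ->; case: (ord2 j2) => ->;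
  rewrite /= !mxE ?mxtens_indexK /=; first [by nsimp | ring].
Qed.

Lemma conj1 n q (G : 'M[R]_2) f F c : (0 < q <= n)%N -> G *m f q.-1 *m G = c *: F ->
  embed1 n q G *m kron R n f *m embed1 n q G =
  c *: kron R n (fun i => if i == q.-1 then F else f i).
Proof.
case: q => // a /andP [_ h] hG /=.
have [b ->] : exists b, n = (a + b.+1)%N by exists (n - a.+1)%N; lia.
have E : (2 ^ a * 2 * 2 ^ b = 2 ^ (a + b.+1))%N by rewrite -mulnA -expnS expnD.
rewrite (@embed1_trip a b _ E) !(kron_trip1 _ E) !trip_mul mul1mx mulmx1 mul1mx mulmx1 hG.
rewrite trip_scale eqxx; congr (_ *: trip _ _ _ _).
  by apply: kron_ext => i hi; have -> : (i == a) = false by apply/negbTE; lia.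
by apply: kron_ext => i hi; have -> : ((a.+1 + i)%N == a) = false by apply/negbTE; lia.
Qed.

Lemma conj2 n q (G : 'M[R]_4) (f : nat -> 'M[R]_2) (F1 F2 : 'M[R]_2) (c : R) : (0 < q < n)%N ->
  G *m (f q.-1 *t f q) *m G = c *: (F1 *t F2) ->
  embed2 n q G *m kron R n f *m embed2 n q G =
  c *: kron R n (fun i => if i == q.-1 then F1 else if i == q then F2 else f i).
Proof.
case: q => // a /andP [_ h] hG /=.
have [b ->] : exists b, n = (a + b.+2)%N by exists (n - a.+2)%N; lia.
have E : (2 ^ a * 4 * 2 ^ b = 2 ^ (a + b.+2))%N.
  by rewrite -mulnA (_ : 4 = 2 * 2)%N // -mulnA -!expnS expnD.
rewrite (@embed2_trip a b _ E) !(kron_trip2 _ E) !trip_mul mul1mx mulmx1 mul1mx mulmx1 hG.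
have -> : (a.+1 == a) = false by apply/negbTE; lia.
rewrite trip_scale !eqxx; congr (_ *: trip _ _ _ _).
  apply: kron_ext => i hi; have -> : (i == a) = false by apply/negbTE; lia.
  by have -> : (i == a.+1) = false by apply/negbTE; lia.
apply: kron_ext => i hi; have -> : ((a.+2 + i)%N == a) = false by apply/negbTE; lia.
by have -> : ((a.+2 + i)%N == a.+1) = false by apply/negbTE; lia.
Qed.

Definition sgn (b : bool) : R := if b then -1 else 1.
Definition pm n (st : bool * word) : 'M[R]_(2 ^ n) := sgn st.1 *: kron R n (fun i => lm (st.2 i)).

Lemma sgnD a b : sgn a * sgn b = sgn (a (+) b).
Proof. by case: a; case: b; rewrite /sgn /= ?mulr1 ?mul1r ?mulrNN ?mulr1. Qed.

Lemma gate_conj n g st : valid n g ->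
  gate_op R n g *m pm n st *m gate_op R n g = pm n (actg g st).
Proof.
case: st => s w; rewrite /pm -scalemxAr -scalemxAl.
case: g => q /= hv.
- rewrite (@conj1 n q _ _ (lm ((w q.-1).2, (w q.-1).1)) (sgn ((w q.-1).1 && (w q.-1).2))) //.
    rewrite scalerA sgnD; congr (_ *: _); apply: kron_ext => i _; rewrite /upd.
    by case: (i == q.-1).
  by rewrite Htab.
- rewrite (@conj1 n q _ _ (lm (w q.-1)) (sgn (w q.-1).1)) //.
    rewrite scalerA sgnD; congr (_ *: _); apply: kron_ext => i _.
    by case: eqP => // ->.
  by rewrite Ztab.
- rewrite (@conj2 n q _ _ (lm ((w q.-1).1, (w q.-1).2 (+) (w q).1))
                         (lm ((w q).1, (w q).2 (+) (w q.-1).1))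
                         (sgn ((w q.-1).1 && (w q).1))) //.
    rewrite scalerA sgnD; congr (_ *: _); apply: kron_ext => i _; rewrite /upd.
    case: (i =P q) => [->|_]; last by case: (i == q.-1).
    by have -> : (q == q.-1) = false by apply/negbTE; lia.
  by rewrite CZtab.
Qed.
End Mat.

Section Mat5.
Variable R : realType.

Lemma embed1_inv n q (G : 'M[R]_2) : (0 < q <= n)%N -> G *m G = 1%:M ->
  embed1 n q G *m embed1 n q G = 1%:M.
Proof.
case: q => // a /andP [_ h] hG /=.
have [b ->] : exists b, n = (a + b.+1)%N by exists (n - a.+1)%N; lia.
have E : (2 ^ a * 2 * 2 ^ b = 2 ^ (a + b.+1))%N by rewrite -mulnA -expnS expnD.
by rewrite (@embed1_trip R a b _ E) trip_mul !mulmx1 hG trip1.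
Qed.

Lemma embed2_inv n q (G : 'M[R]_4) : (0 < q < n)%N -> G *m G = 1%:M ->
  embed2 n q G *m embed2 n q G = 1%:M.
Proof.
case: q => // a /andP [_ h] hG /=.
have [b ->] : exists b, n = (a + b.+2)%N by exists (n - a.+2)%N; lia.
have E : (2 ^ a * 4 * 2 ^ b = 2 ^ (a + b.+2))%N.
  by rewrite -mulnA (_ : 4 = 2 * 2)%N // -mulnA -!expnS expnD.
by rewrite (@embed2_trip R a b _ E) trip_mul !mulmx1 hG trip1.
Qed.

Lemma gate_inv n g : valid n g -> gate_op R n g *m gate_op R n g = 1%:M.
Proof.
case: g => q /= hv.
- apply: embed1_inv => //; have := Htab R lI; rewrite /= mulmx1 scale1r; exact.
- apply: embed1_inv => //; have := Ztab R lI; rewrite /= mulmx1 scale1r; exact.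
- apply: embed2_inv => //; have := CZtab R lI lI; rewrite /= !tens11 mulmx1 scale1r; exact.
Qed.

Lemma circuit_op_acc n gs (A : 'M[R]_(2 ^ n)) :
  foldl (fun acc g => gate_op R n g *m acc) A gs = circuit_op R n gs *m A.
Proof.
elim: gs A => [|g gs IH] A /=; first by rewrite /circuit_op /= mul1mx.
by rewrite /circuit_op /= !IH mulmx1 mulmxA.
Qed.

Lemma circuit_op_cat n gs1 gs2 :
  circuit_op R n (gs1 ++ gs2) = circuit_op R n gs2 *m circuit_op R n gs1.
Proof. by rewrite /circuit_op foldl_cat -/(circuit_op R n gs1) circuit_op_acc. Qed.

Lemma circuit_op_cons n g gs :
  circuit_op R n (g :: gs) = circuit_op R n gs *m gate_op R n g.
Proof. by rewrite -cat1s circuit_op_cat /circuit_op /= mulmx1. Qed.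

Lemma circuit_op_rcons n g gs :
  circuit_op R n (rcons gs g) = gate_op R n g *m circuit_op R n gs.
Proof. by rewrite -cats1 circuit_op_cat /circuit_op /= mulmx1. Qed.

Lemma circuit_op_inv n gs : all (valid n) gs ->
  circuit_op R n gs *m circuit_op R n (rev gs) = 1%:M.
Proof.
elim: gs => [|g gs IH] /=; first by rewrite /circuit_op /= mulmx1.
move=> /andP [hg hgs].
rewrite rev_cons circuit_op_rcons circuit_op_cons -mulmxA (mulmxA (gate_op R n g)).
by rewrite gate_inv // mul1mx IH.
Qed.

Lemma invmx_right n (A B : 'M[R]_n) : A *m B = 1%:M -> invmx A = B.
Proof.
move=> h; have [uA _] := mulmx1_unit h.
by rewrite -[invmx A]mulmx1 -h mulmxA mulVmx // mul1mx.
Qed.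

Definition act_mx n (gs : seq gate) (P : 'M[R]_(2 ^ n)) : 'M[R]_(2 ^ n) :=
  foldl (fun M g => gate_op R n g *m M *m gate_op R n g) P gs.

Lemma conj_act n gs P : all (valid n) gs ->
  conj_by (circuit_op R n gs) P = act_mx gs P.
Proof.
move=> hv; rewrite /conj_by (invmx_right (circuit_op_inv hv)).
elim: gs P hv => [|g gs IH] P /=; first by rewrite /circuit_op /= mul1mx mulmx1.
move=> /andP [hg hgs].
rewrite rev_cons circuit_op_rcons circuit_op_cons -IH //.
by rewrite !mulmxA.
Qed.

Lemma act_pm n gs st : all (valid n) gs -> act_mx gs (pm R n st) = pm R n (actL gs st).
Proof.
elim: gs st => [|g gs IH] st //= /andP [hg hgs].
by rewrite gate_conj // IH.
Qed.

Lemma act_mul n gs (A B : 'M[R]_(2 ^ n)) : all (valid n) gs ->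
  act_mx gs (A *m B) = act_mx gs A *m act_mx gs B.
Proof.
elim: gs A B => [|g gs IH] A B //= /andP [hg hgs].
rewrite -IH //; congr act_mx.
by rewrite !mulmxA -(mulmxA _ (gate_op R n g) (gate_op R n g)) gate_inv // mulmx1.
Qed.

Lemma act_opp n gs (A : 'M[R]_(2 ^ n)) : act_mx gs (- A) = - act_mx gs A.
Proof.
elim: gs A => [|g gs IH] A //=.
by rewrite mulmxN mulNmx IH.
Qed.

Lemma act_1 n gs : all (valid n) gs -> act_mx gs (1%:M : 'M[R]_(2 ^ n)) = 1%:M.
Proof.
elim: gs => [|g gs IH] //= /andP [hg hgs].
by rewrite mulmx1 gate_inv // IH.
Qed.


Lemma kron_mul n (f g : nat -> 'M[R]_2) :
  kron R n f *m kron R n g = kron R n (fun i => f i *m g i).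
Proof.
elim: n f g => [|n IH] f g; first by rewrite /= mulmx1.
by rewrite !kronS castmx_mulg tensmx_mul IH.
Qed.

Lemma kron_scale n (c : nat -> R) (f : nat -> 'M[R]_2) :
  kron R n (fun i => c i *: f i) = (\prod_(i < n) c i) *: kron R n f.
Proof.
elim: n c f => [|n IH] c f; first by rewrite big_ord0 scale1r.
rewrite !kronS IH tensmxZl tensmxZr scalerA castmx_scale big_ord_recl.
by rewrite mulrC.
Qed.

Lemma kron1 n : kron R n (fun _ => 1%:M) = 1%:M.
Proof.
elim: n => [|n IH] //.
by rewrite kronS IH tens11 castmx1.
Qed.

Lemma trace_cast m1 m2 (e : m1 = m2) (A : 'M[R]_m1) : \tr (castmx (e, e) A) = \tr A.
Proof. by case: m2 / e; rewrite castmx_id. Qed.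

Lemma trace_tens m n (A : 'M[R]_m) (B : 'M[R]_n) : \tr (A *t B) = \tr A * \tr B.
Proof.
rewrite /mxtrace mulr_sum; apply: eq_bigr => k _.
by rewrite mxE.
Qed.

Lemma trace_kron n f : \tr (kron R n f) = \prod_(i < n) \tr (f i).
Proof.
elim: n f => [|n IH] f; first by rewrite big_ord0 mxtrace1.
by rewrite kronS trace_cast trace_tens IH big_ord_recl.
Qed.

Lemma trmx_kron n f : (kron R n f)^T = kron R n (fun i => (f i)^T).
Proof.
elim: n f => [|n IH] f; first by rewrite /= trmx1.
by rewrite !kronS trmx_cast trmx_tens IH.
Qed.

Lemma prod_sgn n (w : word) : \prod_(i < n) sgn R (isY (w i)) = sgn R (ypar w n).
Proof.
elim: n => [|n IH]; first by rewrite big_ord0.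
by rewrite big_ord_recr /= IH sgnD.
Qed.

Lemma pm_sq n s w : pm R n (s, w) *m pm R n (s, w) = sgn R (ypar w n) *: 1%:M.
Proof.
rewrite /pm -scalemxAl -scalemxAr scalerA sgnD addbb /= scale1r kron_mul.
rewrite (@kron_ext R n _ (fun i => sgn R (isY (w i)) *: 1%:M)); last by move=> i _; rewrite sqtab.
by rewrite kron_scale kron1 prod_sgn.
Qed.

Lemma N2n_neq0 n : ((2 ^ n)%:R : R) != 0.
Proof. by rewrite pnatr_eq0 expn_eq0. Qed.

Lemma scalar_eq1 n (c : R) : c *: (1%:M : 'M[R]_(2 ^ n)) = 1%:M -> c = 1.
Proof.
move/(congr1 mxtrace); rewrite mxtraceZ mxtrace1 => h.
by apply: (mulIf (N2n_neq0 n)); rewrite mul1r.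
Qed.

Lemma sgn1 b : sgn R b = 1 -> b = false.
Proof. by case: b => //= h; exfalso; lra. Qed.

Lemma par_of_sq n s w : pm R n (s, w) *m pm R n (s, w) = 1%:M -> ypar w n = false.
Proof. by rewrite pm_sq => /scalar_eq1 /sgn1. Qed.

Lemma one_neq0 n : (1%:M : 'M[R]_(2 ^ n)) != 0.
Proof.
apply/negP => /eqP /(congr1 mxtrace); rewrite mxtrace1 mxtrace0 => /eqP.
by rewrite (negbTE (N2n_neq0 n)).
Qed.

Lemma ypar_noY w k : (forall i, isY (w i) = false) -> ypar w k = false.
Proof. by move=> h; elim: k => //= k ->; rewrite h. Qed.

Lemma pm_Z1_sq n : pm R n (false, Z1w) *m pm R n (false, Z1w) = 1%:M.
Proof.
rewrite pm_sq ypar_noY ?scale1r // => i.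
by rewrite /Z1w; case: (i == 0%N).
Qed.

Lemma anticomm_X n s w :
  pm R n (s, w) *m pm R n (s, w) = 1%:M ->
  pm R n (s, w) *m pm R n (false, Z1w) = - (pm R n (false, Z1w) *m pm R n (s, w)) ->
  (w 0%N).1 = true.
Proof.
move=> hsq hac; apply/negbNE/negP => /negbTE h0.
set A := pm R n (s, w) *m pm R n (false, Z1w).
have hc : A = pm R n (false, Z1w) *m pm R n (s, w).
  rewrite /A /pm -!scalemxAl -!scalemxAr !scalerA mulrC !kron_mul; congr (_ *: _).
  apply: kron_ext => i _; have [->|hi] := eqVneq i 0%N.
    by rewrite /= Zcomm h0 scale1r.
  by rewrite /= Z1wS // /lI /= mulmx1 mul1mx.
have hA : A = 0.
  have : (2 : R) *: A = 0 by rewrite scaler_nat mulr2n {1}hc /A hac addrN.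
  by move/eqP; rewrite scalemx_eq0 pnatr_eq0 /= => /eqP.
have : A *m (pm R n (false, Z1w) *m pm R n (s, w)) = 1%:M.
  by rewrite /A !mulmxA -(mulmxA (pm R n (s, w))) pm_Z1_sq mulmx1 hsq.
by rewrite hA mul0mx => /esym /eqP; rewrite (negbTE (one_neq0 n)).
Qed.

Lemma pm_allI n s w : (forall i, (i < n)%N -> w i = lI) -> pm R n (s, w) = sgn R s *: 1%:M.
Proof.
move=> h; rewrite /pm (@kron_ext R n _ (fun _ => 1%:M)) ?kron1 // => i hi.
by rewrite /= h.
Qed.

Lemma trKK n w w' : \tr (kron R n (fun i => lm R (w i)) *m (kron R n (fun i => lm R (w' i)))^T) =
  \prod_(i < n) (if w i == w' i then 2 else 0).
Proof. by rewrite trmx_kron kron_mul trace_kron; apply: eq_bigr => i _; rewrite trtab. Qed.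

Lemma pm_inj n s w s' w' : pm R n (s, w) = pm R n (s', w') ->
  s = s' /\ (forall i, (i < n)%N -> w i = w' i).
Proof.
rewrite /pm /= => h.
set K := kron R n (fun i => lm R (w i)) in h *.
set K' := kron R n (fun i => lm R (w' i)) in h *.
have hK : K = sgn R (s (+) s') *: K'.
  by rewrite -sgnD -scalerA -h scalerA sgnD addbb scale1r.
have hT : \tr (K *m K^T) = 2 ^+ n.
  by rewrite /K trKK (eq_bigr (fun _ => 2)) ?prodr_const ?card_ord // => i _; rewrite eqxx.
have hT' : \tr (K *m K'^T) = sgn R (s (+) s') * 2 ^+ n.
  have e : K' = sgn R (s (+) s') *: K.
    by rewrite hK scalerA sgnD addbb scale1r.
  by rewrite e linearZ /= -scalemxAr mxtraceZ hT.
have n2 : (2 : R) ^+ n != 0 by rewrite expf_neq0 // pnatr_eq0.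
have hs0 : sgn R (s (+) s') != 0 by case: (s (+) s'); rewrite /sgn ?oppr_eq0 oner_eq0.
have heq : forall i, (i < n)%N -> w i = w' i.
  move=> i hi; apply/eqP/negP => /negP hne.
  move: hT'; rewrite /K /K' trKK.
  have /eqP -> : \prod_(i0 < n) (if w i0 == w' i0 then (2 : R) else 0) == 0.
    by apply/prodf_eq0; exists (Ordinal hi) => //; rewrite /= (negbTE hne).
  by move/eqP; rewrite eq_sym mulf_eq0 (negbTE hs0) (negbTE n2).
split=> //.
move: hT'; rewrite /K /K' trKK (eq_bigr (fun _ => 2)) ?prodr_const ?card_ord; last first.
  by move=> i _; rewrite heq // eqxx.
move=> e; have : sgn R (s (+) s') = 1.
  by apply: (mulIf n2); rewrite -e mul1r.
by move/sgn1; case: (s); case: (s').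
Qed.

Definition letter_of (M : 'M[R]_2) : letter :=
  if M == 1%:M then lI else if M == Xm R then lX else if M == Zm R then lZ else lY.

Lemma letter_ofK M : M \in [:: 1%:M; Xm R; Zm R; Xm R *m Zm R] -> lm R (letter_of M) = M.
Proof.
rewrite /letter_of !inE.
case: (M =P 1%:M) => [->//|_]; case: (M =P Xm R) => [->//|_]; case: (M =P Zm R) => [->//|_].
by rewrite /= => /eqP ->.
Qed.

Lemma pauli_repr n P : pauli_group R n P -> exists s w, wf n w /\ P = pm R n (s, w).
Proof.
case=> c [f [hc [hf ->]]].
exists (c == -1), (fun i => if (i < n)%N then letter_of (f i) else lI); split.
  by move=> i hi; rewrite ltnNge hi.
rewrite /pm /=; congr (_ *: _).
  by case: hc => ->; rewrite ?eqxx // /sgn; case: eqP => // h; exfalso; lra.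
by apply: kron_ext => i hi; rewrite hi letter_ofK // hf.
Qed.

End Mat5.

Lemma pm_eq_wf (R : realType) n s w s' w' : wf n w -> wf n w' ->
  pm R n (s, w) = pm R n (s', w') -> (s, w) = (s', w').
Proof.
move=> h1 h2 /pm_inj [-> hw]; congr pair; apply: functional_extensionality => i.
case: (ltnP i n) => hi; [exact: hw | by rewrite h1 // h2].
Qed.

Lemma target_Z (R : realType) n :
  kron R n (fun i => if i == n.-1 then Zm R else 1%:M) = pm R n (false, Znw n).
Proof.
rewrite /pm /sgn /= scale1r; apply: kron_ext => i _.
by rewrite /Znw; case: (i == n.-1).
Qed.

Lemma target_X (R : realType) n :
  kron R n (fun i => if i == n.-1 then Xm R else 1%:M) = pm R n (false, Xnw n).
Proof.
rewrite /pm /sgn /= scale1r; apply: kron_ext => i _.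
by rewrite /Xnw; case: (i == n.-1).
Qed.

Theorem proposition4p14 (R : realType) (n : nat) (P Q : 'M[R]_(2 ^ n)) :
  (1 <= n)%N ->
  pauli_group R n P -> pauli_group R n Q ->
  P *m P = 1%:M -> Q *m Q = 1%:M ->
  P <> 1%:M -> P <> - 1%:M -> Q <> 1%:M -> Q <> - 1%:M ->
  P *m Q = - (Q *m P) ->
  exists! LM : zcircuit * xcircuit,
    is_zcircuit n LM.1 /\ is_xcircuit n LM.2 /\
    conj_by (circuit_op R n (xcircuit_gates n LM.2) *m circuit_op R n (zcircuit_gates LM.1)) P
      = kron R n (fun i => if i == n.-1 then Zm R else 1%:M) /\
    conj_by (circuit_op R n (xcircuit_gates n LM.2) *m circuit_op R n (zcircuit_gates LM.1)) Q
      = kron R n (fun i => if i == n.-1 then Xm R else 1%:M).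
Proof.
move=> n0 hP hQ hPP hQQ hP1 hPm1 hQ1 hQm1 hPQ.
have [sP [wP [wfP eP]]] := pauli_repr hP.
have [sQ [wQ [wfQ eQ]]] := pauli_repr hQ.
rewrite target_Z target_X.
have hex : exists i, (i < n)%N /\ wP i != lI.
  case: (boolP [exists i : 'I_n, wP i != lI]) => [/existsP [i hi]|/existsPn h].
    by exists i.
  have := @pm_allI R n sP wP; rewrite -eP => e; exfalso.
  have hPs : P = sgn R sP *: 1%:M by apply: e => i hi; apply/eqP; have := h (Ordinal hi); rewrite negbK.
  have [hs|hs] : sgn R sP = 1 \/ sgn R sP = -1 by rewrite /sgn; case: (sP); [right|left].
    by apply: hP1; rewrite hPs hs scale1r.
  by apply: hPm1; rewrite hPs hs scaleN1r.
have hparP : ypar wP n = false by apply: (@par_of_sq R n sP wP); rewrite -eP.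
have [hLv hgen] := genZ_canon sP wfP hex hparP.
set L := canonZ n (sP, wP) in hLv hgen *.
have vL := valid_zc hLv.
have hLP : actL (zcircuit_gates L) (sP, wP) = (false, Z1w) by rewrite -hgen (genZ_ok hLv).
case eQ' : (actL (zcircuit_gates L) (sQ, wQ)) => [sQ' wQ'].
have pQ' : pm R n (sQ', wQ') = act_mx (zcircuit_gates L) Q by rewrite eQ act_pm // eQ'.
have pZ1 : pm R n (false, Z1w) = act_mx (zcircuit_gates L) P by rewrite eP act_pm // hLP.
have hsqQ' : pm R n (sQ', wQ') *m pm R n (sQ', wQ') = 1%:M.
  by rewrite pQ' -act_mul // hQQ act_1.
have hacQ' : pm R n (sQ', wQ') *m pm R n (false, Z1w) = - (pm R n (false, Z1w) *m pm R n (sQ', wQ')).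
  rewrite pQ' pZ1 -!act_mul // -act_opp; congr act_mx.
  by rewrite hPQ opprK.
have h0 : wQ' 0%N = lX \/ wQ' 0%N = lY.
  have := anticomm_X hsqQ' hacQ'; case: (wQ' 0%N) => [[] []] //= _; by [left|right].
have hparQ : ypar wQ' n = false by apply: (par_of_sq hsqQ').
have wfQ' : wf n wQ'.
  by have := @wf_actL n (zcircuit_gates L) (sQ, wQ) vL wfQ; rewrite eQ'.
have [hMv hgenX] := genX_canon sQ' n0 wfQ' h0 hparQ.
set M := canonX n (sQ', wQ') in hMv hgenX *.
have vM := valid_xc n0 hMv.
have vLM : all (valid n) (zcircuit_gates L ++ xcircuit_gates n M) by rewrite all_cat vL vM.
exists (L, M); split.
  split=> //; split=> //.
  rewrite /= -circuit_op_cat !conj_act // eP eQ !act_pm // !(actL_cat (zcircuit_gates L)) hLP eQ' -hgenX.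
  by rewrite Z1_ok // genX_ok.
move=> [L2 M2] /= [hL2 [hM2 [e1 e2]]].
have vL2 := valid_zc hL2.
have vM2 := valid_xc n0 hM2.
have vLM2 : all (valid n) (zcircuit_gates L2 ++ xcircuit_gates n M2) by rewrite all_cat vL2 vM2.
rewrite -circuit_op_cat conj_act // eP act_pm // in e1.
rewrite -circuit_op_cat conj_act // eQ act_pm // in e2.
case eA : (actL (zcircuit_gates L2 ++ xcircuit_gates n M2) (sP, wP)) e1 => [a1 a2] e1.
case eB : (actL (zcircuit_gates L2 ++ xcircuit_gates n M2) (sQ, wQ)) e2 => [b1 b2] e2.
have wfA : wf n a2.
  by have := @wf_actL n _ (sP, wP) vLM2 wfP; rewrite eA.
have wfB : wf n b2.
  by have := @wf_actL n _ (sQ, wQ) vLM2 wfQ; rewrite eB.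
have := @pm_eq_wf R n _ _ _ _ wfA (Znw_wf n0) e1; rewrite -eA actL_cat -(Z1_ok n0 hM2) => /actL_inj.
rewrite -(genZ_ok hL2) => /actL_inj hg2.
have hLL : L2 = L by rewrite /L hg2 (canonZ_gen hL2).
have := @pm_eq_wf R n _ _ _ _ wfB (Xnw_wf n0) e2; rewrite -eB actL_cat -(genX_ok n0 hM2) => /actL_inj.
subst L2; rewrite eQ' => hg3.
have hMM : M2 = M by rewrite /M hg3 (canonX_gen n0 hM2).
by rewrite hMM.
Qed.
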